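(* Let $F$ be a once-punctured torus equipped with a point of the decorated super Teichmüller space $S\tilde T(F)$. For an ideal triangulation of $F$ with arcs having super $\lambda$-lengths $a,b,c$, define the super semi-perimeter \[ h=\frac{a}{bc}+\frac{b}{ac}+\frac{c}{ab}+\frac{W_a}{a}+\frac{W_b}{b}+\frac{W_c}{c}. \] Then $h$ is invariant under flips, i.e. it takes the same value for every ideal triangulation of $F$.
   Context: $S\tilde T(F)$ is the decorated $\mathrm{OSp}(1|2)$ super Teichmüller space (Penner–Zeitlin), with values in a real Grassmann algebra. A point assigns, for each ideal triangulation of $F$ (three disjoint non-isotopic ideal arcs cutting $F$ into two ideal triangles), an even $\lambda$-length with positive body to each arc (depending only on the arc), an odd $\mu$-invariant to each triangle, and a spin structure orienting each arc. For an arc $e$, $W_e=\theta_1\theta_2$ where $\theta_1,\theta_2$ are the $\mu$-invariants of the triangles adjacent to $e$ lying counter-clockwise and clockwise of $e$ relative to its spin orientation; $W_e$ does not depend on the triangulation containing $e$. Flipping $c$ in a triangulation $\{a,b,c\}$ (with triangle $\mu$-invariants $\theta,\sigma$) yields the arc $d$ with $cd=a^2+b^2+abW_c$, new $\mu$-invariants $\theta'=(b\theta+a\sigma)/\sqrt{a^2+b^2}$, $\sigma'=(b\sigma-a\theta)/\sqrt{a^2+b^2}$, and the spin orientation on $b$ reversed. *)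

(* Defs.v *)
From HB Require Import structures.
From mathcomp Require Import all_boot all_order all_algebra.
From mathcomp Require Import reals.
Set Implicit Arguments. Unset Strict Implicit. Unset Printing Implicit Defensive.
Import Order.TTheory GRing.Theory Num.Theory.
Local Open Scope ring_scope.

(* [L] is a real algebra with an even part and an odd part, a body map
   (augmentation) to the reals whose kernel is nil; this is satisfied by
   every real Grassmann algebra R[theta_1,...,theta_n] (and more). *)
Definition grassmann_parity (R : realType) (L : unitAlgType R)
    (even odd : L -> Prop) : Prop :=
  [/\ (forall x, exists y z, [/\ even y, odd z & x = y + z]),
      [/\ even 0, even 1, (forall x y, even x -> even y -> even (x + y)),
          (forall x y, even x -> even y -> even (x * y)) &
          (forall (k : R) x, even x -> even (k *: x))],
      [/\ odd 0, (forall x y, odd x -> odd y -> odd (x + y)),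
          (forall (k : R) x, odd x -> odd (k *: x)),
          (forall x y, odd x -> odd y -> even (x * y)) &
          (forall x y, even x -> odd y -> odd (x * y) /\ odd (y * x))],
      (forall x y, even x -> x * y = y * x) &
      (forall x y, odd x -> odd y -> x * y = - (y * x))].

Definition grassmann_body (R : realType) (L : unitAlgType R)
    (odd : L -> Prop) (body : L -> R) : Prop :=
  [/\ body 1 = 1, (forall x y, body (x + y) = body x + body y),
      (forall x y, body (x * y) = body x * body y),
      (forall (k : R) x, body (k *: x) = k * body x) &
      (forall x, odd x -> body x = 0) /\
      (forall x, body x = 0 -> exists n : nat, x ^+ n = 0)].

Definition real_grassmann (R : realType) (L : unitAlgType R)
    (even odd : L -> Prop) (body : L -> R) : Prop :=
  grassmann_parity even odd /\ grassmann_body odd body.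

(* An ideal arc of the once-punctured torus is determined by its slope, a
   primitive integer vector taken up to sign; we represent arcs by integer
   vectors (functions on arcs are required to be invariant under negation).
   Three arcs form an ideal triangulation iff their pairwise determinants
   are +-1 (Farey triangles). *)
Definition vec := (int * int)%type.
Definition vneg (u : vec) : vec := (- u.1, - u.2).
Definition vdet (u v : vec) : int := u.1 * v.2 - u.2 * v.1.

Definition triangulation (u v w : vec) : Prop :=
  [/\ `|vdet u v| = 1, `|vdet v w| = 1 & `|vdet u w| = 1].

(* Flipping the arc [w] in the triangulation {u,v,w} yields the arc [d]:
   the unique other arc (up to sign) completing {u,v} to a triangulation. *)
Definition is_flip (u v w d : vec) : Prop :=
  [/\ triangulation u v w, triangulation u v d, d <> w & d <> vneg w].

(* [lam e] is the super lambda-length of the arc e, [W e] the invariant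
   W_e = theta_1 theta_2 (independent of the triangulation containing e). *)
Definition super_teich_torus (R : realType) (L : unitAlgType R)
    (even odd : L -> Prop) (body : L -> R) (lam W : vec -> L) : Prop :=
  [/\ (forall e, lam (vneg e) = lam e /\ W (vneg e) = W e),
      (forall p q : int, coprimez p q -> even (lam (p, q)) /\ 0 < body (lam (p, q))),
      (* mu-invariants theta, sigma of the two triangles of each triangulation;
         every arc borders both triangles, and W_e = theta_1 theta_2 with
         {theta_1, theta_2} = {theta, sigma} ordered by the spin orientation *)
      (forall u v w, triangulation u v w ->
         exists theta sigma, [/\ odd theta, odd sigma &
           forall e, e = u \/ e = v \/ e = w ->
             W e = theta * sigma \/ W e = sigma * theta]) &
      (forall u v w d, is_flip u v w d ->
         lam w * lam d = lam u ^+ 2 + lam v ^+ 2 + lam u * lam v * W w)].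

Definition semiperimeter (R : realType) (L : unitAlgType R)
    (a b c Wa Wb Wc : L) : L :=
  a / (b * c) + b / (a * c) + c / (a * b) + Wa / a + Wb / b + Wc / c.

(* Main.v *)
Require Import Defs.
From HB Require Import structures.
From mathcomp Require Import all_boot all_order all_algebra.
From mathcomp Require Import reals.
From mathcomp Require Import zify ring lra.
Import Order.TTheory GRing.Theory Num.Theory.
Local Open Scope ring_scope.
Lemma det_coprime (u v : vec) : `|vdet u v| = 1 -> coprimez u.1 u.2 /\ coprimez v.1 v.2.
Proof.
case: u v => [u1 u2] [v1 v2]; rewrite /vdet /= => H.
have Hx : (u1 * v2 - u2 * v1) * (u1 * v2 - u2 * v1) = 1.
  by move: H; set x := _ - _ => H; nia.
split; apply/coprimezP.
  exists ((u1 * v2 - u2 * v1) * v2, - ((u1 * v2 - u2 * v1) * v1)) => /=.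
  by rewrite -Hx; ring.
exists (- ((u1 * v2 - u2 * v1) * u2), (u1 * v2 - u2 * v1) * u1) => /=.
by rewrite -Hx; ring.
Qed.
Lemma body_unit (R : realType) (L : unitAlgType R) (odd : L -> Prop) (body : L -> R) x :
  grassmann_body odd body -> 0 < body x -> x \is a GRing.unit.
Proof.
case=> b1 bD bM bZ [_ bnil] hx.
have b0 : body 0 = 0.
  by have := bD 0 0; rewrite addr0 => h; lra.
have bN y : body (- y) = - body y.
  by have := bD (- y) y; rewrite addNr b0 => h; lra.
set k := body x.
have k0 : k != 0 by rewrite gt_eqF.
set m := 1 - k^-1 *: x.
have : body m = 0 by rewrite /m bD bN bZ b1 mulVf // subrr.
move=> /bnil [n mn].
set S := \sum_(i < n) m ^+ i.
have hS : (m - 1) * S = -1 by rewrite -subrX1 mn sub0r.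
have cmS : GRing.comm (m - 1) S.
  apply: commr_sum => i _; apply: commrX; apply: commr_sym.
  by apply: commrB => //; apply: commr1.
have -> : x = k *: (1 - m) by rewrite /m opprB addrC subrK scalerA divff // scale1r.
rewrite scaler_unit ?unitfE //.
apply/unitrP; exists S; split.
  by rewrite -opprB mulrN -cmS hS opprK.
by rewrite -opprB mulNr hS opprK.
Qed.
Lemma half (R : unitRingType) (a b c d W : R) :
  a \is a GRing.unit -> b \is a GRing.unit -> c \is a GRing.unit ->
  GRing.comm a b -> GRing.comm a c -> GRing.comm b c ->
  GRing.comm W a -> GRing.comm W b -> GRing.comm W c ->
  c * d = a ^+ 2 + b ^+ 2 + a * b * W ->
  a / (b * c) + b / (a * c) + W / c = d / (a * b).
Proof.
move=> ua ub uc cab cac cbc cWa cWb cWc hcd.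
have uab : a * b \is a GRing.unit by rewrite unitrMl.
rewrite -[d](mulKr uc) hcd.
apply: (mulIr uab); rewrite divrK //.
have cVa : GRing.comm c^-1 a by apply/commr_sym/commrV.
have cVb : GRing.comm c^-1 b by apply/commr_sym/commrV.
have cVW : GRing.comm c^-1 W by apply/commr_sym/commrV.
rewrite !mulrDl !mulrDr.
congr (_ + _ + _).
- rewrite [a * b]cab mulrA -[a / (b * c) * b]mulrA invrM // -[c^-1 * b^-1 * b]mulrA mulVr // mulr1.
  by rewrite -cVa -mulrA.
- rewrite mulrA -[b / (a * c) * a]mulrA invrM // -[c^-1 * a^-1 * a]mulrA mulVr // mulr1.
  by rewrite -cVb -mulrA.
- by rewrite -cVW -mulrA (commrM cWa cWb).
Qed.
Lemma rearr (V : zmodType) (p q r s t P Q S x y : V) :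
  p + q + r = y -> P + Q + S = x ->
  p + q + x + s + t + r = P + Q + y + s + t + S.
Proof.
move=> hy hx.
rewrite (addrAC (p+q+x+s) t r) (addrAC (p+q+x) s r) (addrAC (p+q) x r) hy.
rewrite (addrAC (P+Q+y+s) t S) (addrAC (P+Q+y) s S) (addrAC (P+Q) y S) hx.
by rewrite (addrC y x).
Qed.

Lemma lam_good (R : realType) (L : unitAlgType R)
    (even odd : L -> Prop) (body : L -> R) (lam W : vec -> L) :
  super_teich_torus even odd body lam W ->
  forall e : vec, coprimez e.1 e.2 -> even (lam e) /\ 0 < body (lam e).
Proof. by case=> _ hl _ _ [e1 e2] /= co; apply: hl. Qed.

Theorem proposition4p2 (R : realType) (L : unitAlgType R)
    (even odd : L -> Prop) (body : L -> R) (lam W : vec -> L) :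
  real_grassmann even odd body ->
  super_teich_torus even odd body lam W ->
  forall u v w d : vec, is_flip u v w d ->
    semiperimeter (lam u) (lam v) (lam w) (W u) (W v) (W w)
    = semiperimeter (lam u) (lam v) (lam d) (W u) (W v) (W d).
Proof.
move=> [[_ _ [_ _ _ oddM _] ceven _] gb] hst.
have hst' := hst; case: hst' => _ _ htri hpt.
move=> u v w d hf.
have hf' := hf; case: hf' => tw td hdw hdnw.
have [[duv dvw _] [_ dvd _]] := (tw, td).
have [cu cv] := det_coprime _ _ duv.
have [_ cw] := det_coprime _ _ dvw.
have [_ cd] := det_coprime _ _ dvd.
have [ea ba] := @lam_good _ _ _ _ _ _ _ hst _ cu.
have [eb bb] := @lam_good _ _ _ _ _ _ _ hst _ cv.
have [ec bc] := @lam_good _ _ _ _ _ _ _ hst _ cw.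
have [ed bd] := @lam_good _ _ _ _ _ _ _ hst _ cd.
have ua := @body_unit _ _ _ _ _ gb ba.
have ub := @body_unit _ _ _ _ _ gb bb.
have uc := @body_unit _ _ _ _ _ gb bc.
have ud := @body_unit _ _ _ _ _ gb bd.
have eW : even (W w).
  have [th [sg [oth osg hW]]] := htri u v w tw.
  by case: (hW w (or_intror (or_intror erefl))) => ->; apply: oddM.
have hf2 : is_flip u v d w.
  split=> // [h|h]; first by apply: hdw.
  apply: hdnw; rewrite h /vneg; case: (d) => d1 d2 /=; by rewrite !opprK.
have p1 := hpt _ _ _ _ hf.
have p2 := hpt _ _ _ _ hf2.
have hWd : W d = W w.
  move: p2; rewrite (ceven _ _ ed) p1 => /addrI; rewrite -!mulrA.
  by move=> /(mulrI ua) /(mulrI ub).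
rewrite /semiperimeter hWd.
apply: rearr.
  by apply: half => //; apply: ceven.
apply: half => //; try by apply: ceven.
by rewrite (ceven _ _ ed).
Qed.
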